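(* Let $X$ be a normed space and $Y$ a Banach space, and let $l\in\{-1,1\}$. Let $f:X\to Y$ be an odd mapping satisfying $\|D_f(x,y)\|\le\phi(x,y)$ for all $x,y\in X$, where $\phi:X\times X\to[0,\infty)$ is a function such that $$\sum_{i=1}^{\infty}2^{il}\phi\left(\frac{x}{2^{il}},\frac{x}{2^{il}}\right)<\infty\quad\text{and}\quad\sum_{i=1}^{\infty}8^{il}\phi\left(\frac{x}{2^{il}},\frac{x}{2^{il}}\right)<\infty$$ for all $x\in X$, and $\lim_{n\to\infty}2^{ln}\phi\left(\frac{x}{2^{ln}},\frac{y}{2^{ln}}\right)=0$ and $\lim_{n\to\infty}8^{ln}\phi\left(\frac{x}{2^{ln}},\frac{y}{2^{ln}}\right)=0$ for all $x,y\in X$. Then there exist a unique additive function $A:X\to Y$ and a unique cubic function $C:X\to Y$ such that $$\|f(x)-A(x)-C(x)\|\le\frac{1}{12}\sum_{i=\frac{|l-1|}{2}}^{\infty}\left(2^{il}+8^{il}\right)\phi\left(\frac{x}{2^{l(i+l)}},\frac{x}{2^{l(i+l)}}\right)$$ for all $x\in X$ (the summation starts at $i=0$ if $l=1$ and at $i=1$ if $l=-1$).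
   Context: For a mapping $f:X\to Y$ define $$D_f(x,y)=3f(x+3y)-f(3x+y)-12[f(x+y)+f(x-y)]+16[f(x)+f(y)]-12f(2y)+4f(2x)$$ for $x,y\in X$. A function $g:X\to Y$ is additive if $g(x+y)=g(x)+g(y)$ for all $x,y\in X$, and cubic if $g(x+2y)-3g(x+y)+3g(x)-g(x-y)=6g(y)$ for all $x,y\in X$. *)

(* Defs.v *)
From HB Require Import structures.
From mathcomp Require Import all_boot all_order all_algebra.
From mathcomp Require Import all_classical all_reals all_analysis.
Set Implicit Arguments. Unset Strict Implicit. Unset Printing Implicit Defensive.
Import Order.TTheory GRing.Theory Num.Theory.
Import numFieldNormedType.Exports.
Local Open Scope ring_scope.

Section Defs.
Variables (R : realType) (X : normedModType R) (Y : normedModType R).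

Definition Dfun (f : X -> Y) (x y : X) : Y :=
  (3 : R) *: f (x + (3 : R) *: y) - f ((3 : R) *: x + y)
  - (12 : R) *: (f (x + y) + f (x - y)) + (16 : R) *: (f x + f y)
  - (12 : R) *: f ((2 : R) *: y) + (4 : R) *: f ((2 : R) *: x).

Definition additive_fun (g : X -> Y) : Prop :=
  forall x y, g (x + y) = g x + g y.

Definition cubic_fun (g : X -> Y) : Prop :=
  forall x y, g (x + (2 : R) *: y) - (3 : R) *: g (x + y) + (3 : R) *: g x - g (x - y)
              = (6 : R) *: g y.

Definition odd_fun (g : X -> Y) : Prop := forall x, g (- x) = - g x.

End Defs.

(* Main.v *)
Require Import Defs.
From HB Require Import structures.
From mathcomp Require Import all_boot all_order all_algebra.
From mathcomp Require Import all_classical all_reals all_analysis.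
From mathcomp Require Import ring lra.
Import Order.TTheory GRing.Theory Num.Theory.
Import numFieldNormedType.Exports.
Local Open Scope classical_set_scope.
Local Open Scope ring_scope.


Section Lin.
Variables (R : realType) (V : lmodType R).

Inductive lx := LA of nat | LP of lx & lx | LN of lx | LS of R & lx | LZ.

Fixpoint ev (env : nat -> V) (e : lx) : V :=
  match e with
  | LA n => env n
  | LP a b => ev env a + ev env b
  | LN a => - ev env a
  | LS r a => r *: ev env a
  | LZ => 0
  end.

Fixpoint co (e : lx) (j : nat) : R :=
  match e with
  | LA n => if n == j then 1 else 0
  | LP a b => co a j + co b j
  | LN a => - co a j
  | LS r a => r * co a j
  | LZ => 0
  end.

Fixpoint mx (e : lx) : nat :=
  match e with
  | LA n => n
  | LP a b => maxn (mx a) (mx b)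
  | LN a => mx a
  | LS _ a => mx a
  | LZ => 0
  end.

Lemma ev_co env e N : (mx e < N)%N -> ev env e = \sum_(j < N) co e j *: env j.
Proof.
elim: e => [n|a iha b ihb|a iha|r a iha|] /=.
- move=> nN; rewrite (bigD1 (Ordinal nN)) //= eqxx scale1r big1 ?addr0 //.
  move=> j /eqP jn; case: eqP => [h|_]; last by rewrite scale0r.
  by exfalso; apply: jn; apply: val_inj => /=.
- rewrite gtn_max => /andP[ha hb]; rewrite iha // ihb // -big_split /=.
  by apply: eq_bigr => j _; rewrite scalerDl.
- by move=> h; rewrite iha // -sumrN; apply: eq_bigr => j _; rewrite scaleNr.
- by move=> h; rewrite iha // scaler_sumr; apply: eq_bigr => j _; rewrite scalerA.
- by move=> _; rewrite big1 // => j _; rewrite scale0r.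
Qed.

Lemma ev_eq env e1 e2 N : (mx e1 < N)%N -> (mx e2 < N)%N ->
  (forall j, (j < N)%N -> co e1 j = co e2 j) -> ev env e1 = ev env e2.
Proof.
move=> h1 h2 hc; rewrite (@ev_co env e1 N h1) (@ev_co env e2 N h2).
by apply: eq_bigr => j _; rewrite hc.
Qed.

End Lin.
Arguments LA {R}.
Arguments LP {R}.
Arguments LN {R}.
Arguments LS {R}.
Arguments ev {R V}.
Arguments co {R}.
Arguments mx {R}.
Arguments LZ {R}.
Ltac find_idx t l :=
  match l with
  | cons ?u ?l' =>
    match tt with
    | _ => let _ := constr:(@erefl _ t : t = u) in constr:(0%N)
    | _ => let n := find_idx t l' in constr:(S n)
    end
  end.

Ltac mem_atom t l :=
  match l with
  | nil => constr:(false)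
  | cons ?u ?l' =>
    match tt with
    | _ => let _ := constr:(@erefl _ t : t = u) in constr:(true)
    | _ => mem_atom t l'
    end
  end.

Ltac add_atom t l :=
  let b := mem_atom t l in
  lazymatch b with
  | true => l
  | false => constr:(cons t l)
  end.

Ltac atoms_of t l :=
  lazymatch t with
  | (?a + ?b)%R => let l1 := atoms_of a l in atoms_of b l1
  | (- ?a)%R => atoms_of a l
  | (?r *: ?a)%R => atoms_of a l
  | 0%R => l
  | _ => add_atom t l
  end.

Ltac reify R t l :=
  lazymatch t with
  | (?a + ?b)%R => let ea := reify R a l in let eb := reify R b l in constr:(@LP R ea eb)
  | (- ?a)%R => let ea := reify R a l in constr:(@LN R ea)
  | (?r *: ?a)%R => let ea := reify R a l in constr:(@LS R r ea)
  | 0%R => constr:(@LZ R)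
  | _ => let n := find_idx t l in constr:(@LA R n)
  end.

Ltac nzs := repeat (match goal with |- is_true (_ && _) => apply/andP; split end);
  try (apply: expf_neq0); try assumption.

Ltac lin R :=
  cbv beta;
  lazymatch goal with
  | |- @eq ?T ?A ?B =>
    let l0 := constr:(@nil T) in
    let l1 := atoms_of A l0 in
    let l := atoms_of B l1 in
    let eA := reify R A l in
    let eB := reify R B l in
    change (ev (fun j => nth 0%R l j) eA = ev (fun j => nth 0%R l j) eB);
    apply: (@ev_eq R _ _ eA eB (size l)) => //;
    let j := fresh "j" in let hj := fresh "hj" in
    move=> j hj;
    repeat (first [ by rewrite !ltnS ltn0 in hj
                  | case: j hj => [_|j hj]; [by rewrite /=; first [ring | lra | (field; solve [nzs])] |] ])
  end.

Ltac lin_dbg R :=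
  cbv beta;
  lazymatch goal with
  | |- @eq ?T ?A ?B =>
    let l0 := constr:(@nil T) in
    let l1 := atoms_of A l0 in
    let l := atoms_of B l1 in
    let eA := reify R A l in
    let eB := reify R B l in
    change (ev (fun j => nth 0%R l j) eA = ev (fun j => nth 0%R l j) eB);
    apply: (@ev_eq R _ _ eA eB (size l)) => //
  end.
Section Alg.
Variables (R : realType) (X Y : normedModType R).
Implicit Types (F : X -> Y).

Definition hmg F (m k : R) := forall z, F (m *: z) = k *: F z.

Lemma odd0 F : odd_fun F -> F 0 = 0.
Proof.
move=> ho; have h : F 0 = - F 0 by rewrite -{1}oppr0 ho.
have : (2:R) *: F 0 = 0 by rewrite scaler_nat mulr2n {2}h subrr.
by move/eqP; rewrite scaler_eq0 pnatr_eq0 orFb => /eqP.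
Qed.

Lemma hom0 F : odd_fun F -> hmg F 0 0.
Proof. by move=> ho z; rewrite !scale0r odd0. Qed.
Lemma hom1 F : hmg F 1 1.
Proof. by move=> z; rewrite !scale1r. Qed.
Lemma homN1 F : odd_fun F -> hmg F (-1) (-1).
Proof. by move=> ho z; rewrite !scaleN1r ho. Qed.
Lemma homM F m1 k1 m2 k2 : hmg F m1 k1 -> hmg F m2 k2 -> hmg F (m1 * m2) (k1 * k2).
Proof. by move=> h1 h2 z; rewrite -scalerA h1 h2 scalerA. Qed.

Lemma argnorm F (x y : X) (a b m k : R) : hmg F m k ->
  forall P Q : R, P = m * a -> Q = m * b ->
  F (P *: x + Q *: y) = k *: F (a *: x + b *: y).
Proof. by move=> hm P Q -> ->; rewrite -!scalerA -scalerDr hm. Qed.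

Definition Dex (k0 k1 k2 k3 k4 k5 k6 k7 : R) (i0 i1 i2 i3 i4 i5 i6 i7 : nat) : lx R :=
  LP (LP (LP (LP (LP (LS 3 (LS k0 (LA i0))) (LN (LS k1 (LA i1))))
     (LN (LS 12 (LP (LS k2 (LA i2)) (LS k3 (LA i3))))))
     (LS 16 (LP (LS k4 (LA i4)) (LS k5 (LA i5)))))
     (LN (LS 12 (LS k6 (LA i6))))) (LS 4 (LS k7 (LA i7))).

Lemma DfunE F (x y : X) (env : nat -> Y) (p q r s : R)
  (k0 k1 k2 k3 k4 k5 k6 k7 : R) (i0 i1 i2 i3 i4 i5 i6 i7 : nat) :
  F ((p + 3 * r) *: x + (q + 3 * s) *: y) = k0 *: env i0 ->
  F ((3 * p + r) *: x + (3 * q + s) *: y) = k1 *: env i1 ->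
  F ((p + r) *: x + (q + s) *: y) = k2 *: env i2 ->
  F ((p - r) *: x + (q - s) *: y) = k3 *: env i3 ->
  F (p *: x + q *: y) = k4 *: env i4 ->
  F (r *: x + s *: y) = k5 *: env i5 ->
  F ((2 * r) *: x + (2 * s) *: y) = k6 *: env i6 ->
  F ((2 * p) *: x + (2 * q) *: y) = k7 *: env i7 ->
  Dfun F (p *: x + q *: y) (r *: x + s *: y) =
  ev env (Dex k0 k1 k2 k3 k4 k5 k6 k7 i0 i1 i2 i3 i4 i5 i6 i7).
Proof.
move=> e0 e1 e2 e3 e4 e5 e6 e7; rewrite /Dfun /=.
rewrite -e0 -e1 -e2 -e3 -e4 -e5 -e6 -e7.
have E1 : p *: x + q *: y + 3 *: (r *: x + s *: y) = (p + 3 * r) *: x + (q + 3 * s) *: y.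
  by rewrite scalerDr !scalerA addrACA -!scalerDl.
have E2 : 3 *: (p *: x + q *: y) + (r *: x + s *: y) = (3 * p + r) *: x + (3 * q + s) *: y.
  by rewrite scalerDr !scalerA addrACA -!scalerDl.
have E3 : p *: x + q *: y + (r *: x + s *: y) = (p + r) *: x + (q + s) *: y.
  by rewrite addrACA -!scalerDl.
have E4 : p *: x + q *: y - (r *: x + s *: y) = (p - r) *: x + (q - s) *: y.
  by rewrite opprD addrACA -!scaleNr -!scalerDl.
have E6 : 2 *: (r *: x + s *: y) = (2 * r) *: x + (2 * s) *: y.
  by rewrite scalerDr !scalerA.
have E7 : 2 *: (p *: x + q *: y) = (2 * p) *: x + (2 * q) *: y.
  by rewrite scalerDr !scalerA.
by rewrite E1 E2 E3 E4 E6 E7.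
Qed.

Lemma ev_comb (env : nat -> Y) c e r : ev env (LP (LS c e) r) = c *: ev env e + ev env r.
Proof. by []. Qed.

End Alg.
Arguments hmg {R X Y}.
Arguments hom1 {R X Y}.
Arguments homM {R X Y F m1 k1 m2 k2}.
Arguments argnorm {R X Y F x y a b m k}.
Arguments Dex {R}.
Arguments homN1 {R X Y F}.
Arguments hom0 {R X Y F}.
Arguments odd0 {R X Y F}.
Section Gen.
Variables (R : realType) (X Y : normedModType R).

Lemma hom3_add (F : X -> Y) (x y : X) (hD : forall a b, Dfun F a b = 0) (hN : hmg F (-1) (-1)) (h0 : hmg F 0 0) (h1 : hmg F 1 1) (h2 : hmg F 2 2) :
  (1 *: F (3 *: x + 0 *: y) + (-3) *: F (1 *: x + 0 *: y)) = 0.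
Proof.
pose env := (fun j => nth 0 [:: F (3 *: x + 0 *: y); F (1 *: x + 0 *: y)] j).
change (ev env (LP (LS 1 (LA 0)) (LS (-3) (LA 1))) = 0).
have Z0 : Dfun F ((-1) *: x + 0 *: y) (0 *: x + 0 *: y) = ev env (Dex ((-1) * 1) ((-1) * 1) ((-1) * 1) ((-1) * 1) ((-1) * 1) 0 0 ((-1) * (2 * 1)) 1 0 1 1 1 1 1 1).
  apply: DfunE.
  by apply: (argnorm (a:=1) (b:=0) (homM hN (hom1 F))); lra.
  by apply: (argnorm (a:=3) (b:=0) (homM hN (hom1 F))); lra.
  by apply: (argnorm (a:=1) (b:=0) (homM hN (hom1 F))); lra.
  by apply: (argnorm (a:=1) (b:=0) (homM hN (hom1 F))); lra.
  by apply: (argnorm (a:=1) (b:=0) (homM hN (hom1 F))); lra.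
  by apply: (argnorm (a:=1) (b:=0) h0); lra.
  by apply: (argnorm (a:=1) (b:=0) h0); lra.
  by apply: (argnorm (a:=1) (b:=0) (homM hN (homM h2 (hom1 F)))); lra.
rewrite hD in Z0.
have key : ev env (LS 1 (LP (LS 1 (LA 0)) (LS (-3) (LA 1)))) = ev env (LP (LS 1 (Dex ((-1) * 1) ((-1) * 1) ((-1) * 1) ((-1) * 1) ((-1) * 1) 0 0 ((-1) * (2 * 1)) 1 0 1 1 1 1 1 1)) LZ).
  apply: (@ev_eq _ _ env _ _ 2) => //.
  move=> j hj; do 2! [case: j hj => [_|j hj]; first by rewrite /=; lra].
  by rewrite !ltnS ltn0 in hj.
rewrite !ev_comb -Z0 !scaler0 !add0r /= in key.
move/eqP: key; rewrite scaler_eq0 ?oner_eq0 ?pnatr_eq0 /= => /eqP h; exact: h.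
Qed.

Lemma add_core (F : X -> Y) (x y : X) (hD : forall a b, Dfun F a b = 0) (hN : hmg F (-1) (-1)) (h0 : hmg F 0 0) (h1 : hmg F 1 1) (h2 : hmg F 2 2) (h3 : hmg F 3 3) :
  (1 *: F (1 *: x + 1 *: y) + ((-1) *: F (1 *: x + 0 *: y) + (-1) *: F (0 *: x + 1 *: y))) = 0.
Proof.
pose env := (fun j => nth 0 [:: F (1 *: x + 1 *: y); F (1 *: x + 0 *: y); F (0 *: x + 1 *: y); F (2 *: x + 3 *: y); F (6 *: x + 1 *: y); F (2 *: x + 1 *: y); F (2 *: x + (-1) *: y)] j).
change (ev env (LP (LS 1 (LA 0)) (LP (LS (-1) (LA 1)) (LS (-1) (LA 2)))) = 0).
have Z0 : Dfun F ((-2) *: x + 0 *: y) (0 *: x + (-1) *: y) = ev env (Dex ((-1) * 1) ((-1) * 1) ((-1) * 1) ((-1) * 1) ((-1) * (2 * 1)) ((-1) * 1) ((-1) * (2 * 1)) ((-1) * (2 * (2 * 1))) 3 4 5 6 1 2 2 1).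
  apply: DfunE.
  by apply: (argnorm (a:=2) (b:=3) (homM hN (hom1 F))); lra.
  by apply: (argnorm (a:=6) (b:=1) (homM hN (hom1 F))); lra.
  by apply: (argnorm (a:=2) (b:=1) (homM hN (hom1 F))); lra.
  by apply: (argnorm (a:=2) (b:=(-1)) (homM hN (hom1 F))); lra.
  by apply: (argnorm (a:=1) (b:=0) (homM hN (homM h2 (hom1 F)))); lra.
  by apply: (argnorm (a:=0) (b:=1) (homM hN (hom1 F))); lra.
  by apply: (argnorm (a:=0) (b:=1) (homM hN (homM h2 (hom1 F)))); lra.
  by apply: (argnorm (a:=1) (b:=0) (homM hN (homM h2 (homM h2 (hom1 F))))); lra.
rewrite hD in Z0.
have Z1 : Dfun F ((-1) *: x + (-1) *: y) (1 *: x + 0 *: y) = ev env (Dex 1 ((-1) * 1) ((-1) * 1) ((-1) * 1) ((-1) * 1) 1 (2 * 1) ((-1) * (2 * 1)) 6 3 2 5 0 1 1 0).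
  apply: DfunE.
  by apply: (argnorm (a:=2) (b:=(-1)) (hom1 F)); lra.
  by apply: (argnorm (a:=2) (b:=3) (homM hN (hom1 F))); lra.
  by apply: (argnorm (a:=0) (b:=1) (homM hN (hom1 F))); lra.
  by apply: (argnorm (a:=2) (b:=1) (homM hN (hom1 F))); lra.
  by apply: (argnorm (a:=1) (b:=1) (homM hN (hom1 F))); lra.
  by apply: (argnorm (a:=1) (b:=0) (hom1 F)); lra.
  by apply: (argnorm (a:=1) (b:=0) (homM h2 (hom1 F))); lra.
  by apply: (argnorm (a:=1) (b:=1) (homM hN (homM h2 (hom1 F)))); lra.
rewrite hD in Z1.
have Z2 : Dfun F ((-1) *: x + 0 *: y) (1 *: x + 1 *: y) = ev env (Dex 1 ((-1) * 1) 1 ((-1) * 1) ((-1) * 1) 1 (2 * 1) ((-1) * (2 * 1)) 3 6 2 5 1 0 0 1).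
  apply: DfunE.
  by apply: (argnorm (a:=2) (b:=3) (hom1 F)); lra.
  by apply: (argnorm (a:=2) (b:=(-1)) (homM hN (hom1 F))); lra.
  by apply: (argnorm (a:=0) (b:=1) (hom1 F)); lra.
  by apply: (argnorm (a:=2) (b:=1) (homM hN (hom1 F))); lra.
  by apply: (argnorm (a:=1) (b:=0) (homM hN (hom1 F))); lra.
  by apply: (argnorm (a:=1) (b:=1) (hom1 F)); lra.
  by apply: (argnorm (a:=1) (b:=1) (homM h2 (hom1 F))); lra.
  by apply: (argnorm (a:=1) (b:=0) (homM hN (homM h2 (hom1 F)))); lra.
rewrite hD in Z2.
have Z3 : Dfun F (0 *: x + (-1) *: y) ((-2) *: x + 0 *: y) = ev env (Dex ((-1) * 1) ((-1) * 1) ((-1) * 1) 1 ((-1) * 1) ((-1) * (2 * 1)) ((-1) * (2 * (2 * 1))) ((-1) * (2 * 1)) 4 3 5 6 2 1 1 2).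
  apply: DfunE.
  by apply: (argnorm (a:=6) (b:=1) (homM hN (hom1 F))); lra.
  by apply: (argnorm (a:=2) (b:=3) (homM hN (hom1 F))); lra.
  by apply: (argnorm (a:=2) (b:=1) (homM hN (hom1 F))); lra.
  by apply: (argnorm (a:=2) (b:=(-1)) (hom1 F)); lra.
  by apply: (argnorm (a:=0) (b:=1) (homM hN (hom1 F))); lra.
  by apply: (argnorm (a:=1) (b:=0) (homM hN (homM h2 (hom1 F)))); lra.
  by apply: (argnorm (a:=1) (b:=0) (homM hN (homM h2 (homM h2 (hom1 F))))); lra.
  by apply: (argnorm (a:=0) (b:=1) (homM hN (homM h2 (hom1 F)))); lra.
rewrite hD in Z3.
have key : ev env (LS 192 (LP (LS 1 (LA 0)) (LP (LS (-1) (LA 1)) (LS (-1) (LA 2))))) = ev env (LP (LS 3 (Dex ((-1) * 1) ((-1) * 1) ((-1) * 1) ((-1) * 1) ((-1) * (2 * 1)) ((-1) * 1) ((-1) * (2 * 1)) ((-1) * (2 * (2 * 1))) 3 4 5 6 1 2 2 1)) (LP (LS (-10) (Dex 1 ((-1) * 1) ((-1) * 1) ((-1) * 1) ((-1) * 1) 1 (2 * 1) ((-1) * (2 * 1)) 6 3 2 5 0 1 1 0)) (LP (LS 6 (Dex 1 ((-1) * 1) 1 ((-1) * 1) ((-1) * 1) 1 (2 * 1) ((-1) * (2 * 1)) 3 6 2 5 1 0 0 1)) (LP (LS 1 (Dex ((-1) * 1) ((-1) * 1) ((-1) * 1) 1 ((-1) * 1) ((-1) * (2 * 1)) ((-1)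 * (2 * (2 * 1))) ((-1) * (2 * 1)) 4 3 5 6 2 1 1 2)) LZ)))).
  apply: (@ev_eq _ _ env _ _ 7) => //.
  move=> j hj; do 7! [case: j hj => [_|j hj]; first by rewrite /=; lra].
  by rewrite !ltnS ltn0 in hj.
rewrite !ev_comb -Z0 -Z1 -Z2 -Z3 !scaler0 !add0r /= in key.
move/eqP: key; rewrite scaler_eq0 ?oner_eq0 ?pnatr_eq0 /= => /eqP h; exact: h.
Qed.

Lemma hom3_cub (F : X -> Y) (x y : X) (hD : forall a b, Dfun F a b = 0) (hN : hmg F (-1) (-1)) (h0 : hmg F 0 0) (h1 : hmg F 1 1) (h2 : hmg F 2 8) :
  (1 *: F (3 *: x + 0 *: y) + (-27) *: F (1 *: x + 0 *: y)) = 0.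
Proof.
pose env := (fun j => nth 0 [:: F (3 *: x + 0 *: y); F (1 *: x + 0 *: y)] j).
change (ev env (LP (LS 1 (LA 0)) (LS (-27) (LA 1))) = 0).
have Z0 : Dfun F ((-1) *: x + 0 *: y) (0 *: x + 0 *: y) = ev env (Dex ((-1) * 1) ((-1) * 1) ((-1) * 1) ((-1) * 1) ((-1) * 1) 0 0 ((-1) * (8 * 1)) 1 0 1 1 1 1 1 1).
  apply: DfunE.
  by apply: (argnorm (a:=1) (b:=0) (homM hN (hom1 F))); lra.
  by apply: (argnorm (a:=3) (b:=0) (homM hN (hom1 F))); lra.
  by apply: (argnorm (a:=1) (b:=0) (homM hN (hom1 F))); lra.
  by apply: (argnorm (a:=1) (b:=0) (homM hN (hom1 F))); lra.
  by apply: (argnorm (a:=1) (b:=0) (homM hN (hom1 F))); lra.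
  by apply: (argnorm (a:=1) (b:=0) h0); lra.
  by apply: (argnorm (a:=1) (b:=0) h0); lra.
  by apply: (argnorm (a:=1) (b:=0) (homM hN (homM h2 (hom1 F)))); lra.
rewrite hD in Z0.
have key : ev env (LS 1 (LP (LS 1 (LA 0)) (LS (-27) (LA 1)))) = ev env (LP (LS 1 (Dex ((-1) * 1) ((-1) * 1) ((-1) * 1) ((-1) * 1) ((-1) * 1) 0 0 ((-1) * (8 * 1)) 1 0 1 1 1 1 1 1)) LZ).
  apply: (@ev_eq _ _ env _ _ 2) => //.
  move=> j hj; do 2! [case: j hj => [_|j hj]; first by rewrite /=; lra].
  by rewrite !ltnS ltn0 in hj.
rewrite !ev_comb -Z0 !scaler0 !add0r /= in key.
move/eqP: key; rewrite scaler_eq0 ?oner_eq0 ?pnatr_eq0 /= => /eqP h; exact: h.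
Qed.

Lemma cub_core (F : X -> Y) (x y : X) (hD : forall a b, Dfun F a b = 0) (hN : hmg F (-1) (-1)) (h0 : hmg F 0 0) (h1 : hmg F 1 1) (h2 : hmg F 2 8) (h3 : hmg F 3 27) :
  (1 *: F (1 *: x + 2 *: y) + ((-3) *: F (1 *: x + 1 *: y) + (3 *: F (1 *: x + 0 *: y) + ((-1) *: F (1 *: x + (-1) *: y) + (-6) *: F (0 *: x + 1 *: y))))) = 0.
Proof.
pose env := (fun j => nth 0 [:: F (1 *: x + 2 *: y); F (1 *: x + 1 *: y); F (1 *: x + 0 *: y); F (1 *: x + (-1) *: y); F (0 *: x + 1 *: y); F (1 *: x + (-2) *: y); F (3 *: x + 2 *: y); F (1 *: x + 6 *: y); F (3 *: x + (-2) *: y); F (1 *: x + (-6) *: y)] j).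
change (ev env (LP (LS 1 (LA 0)) (LP (LS (-3) (LA 1)) (LP (LS 3 (LA 2)) (LP (LS (-1) (LA 3)) (LS (-6) (LA 4)))))) = 0).
have Z0 : Dfun F ((-1) *: x + (-1) *: y) (0 *: x + 1 *: y) = ev env (Dex ((-1) * 1) ((-1) * 1) ((-1) * 1) ((-1) * 1) ((-1) * 1) 1 (8 * 1) ((-1) * (8 * 1)) 5 6 2 0 1 4 4 1).
  apply: DfunE.
  by apply: (argnorm (a:=1) (b:=(-2)) (homM hN (hom1 F))); lra.
  by apply: (argnorm (a:=3) (b:=2) (homM hN (hom1 F))); lra.
  by apply: (argnorm (a:=1) (b:=0) (homM hN (hom1 F))); lra.
  by apply: (argnorm (a:=1) (b:=2) (homM hN (hom1 F))); lra.
  by apply: (argnorm (a:=1) (b:=1) (homM hN (hom1 F))); lra.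
  by apply: (argnorm (a:=0) (b:=1) (hom1 F)); lra.
  by apply: (argnorm (a:=0) (b:=1) (homM h2 (hom1 F))); lra.
  by apply: (argnorm (a:=1) (b:=1) (homM hN (homM h2 (hom1 F)))); lra.
rewrite hD in Z0.
have Z1 : Dfun F (0 *: x + (-2) *: y) ((-1) *: x + 0 *: y) = ev env (Dex ((-1) * 1) ((-1) * 1) ((-1) * 1) 1 ((-1) * (8 * 1)) ((-1) * 1) ((-1) * (8 * 1)) ((-1) * (8 * (8 * 1))) 6 7 0 5 4 2 2 4).
  apply: DfunE.
  by apply: (argnorm (a:=3) (b:=2) (homM hN (hom1 F))); lra.
  by apply: (argnorm (a:=1) (b:=6) (homM hN (hom1 F))); lra.
  by apply: (argnorm (a:=1) (b:=2) (homM hN (hom1 F))); lra.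
  by apply: (argnorm (a:=1) (b:=(-2)) (hom1 F)); lra.
  by apply: (argnorm (a:=0) (b:=1) (homM hN (homM h2 (hom1 F)))); lra.
  by apply: (argnorm (a:=1) (b:=0) (homM hN (hom1 F))); lra.
  by apply: (argnorm (a:=1) (b:=0) (homM hN (homM h2 (hom1 F)))); lra.
  by apply: (argnorm (a:=0) (b:=1) (homM hN (homM h2 (homM h2 (hom1 F))))); lra.
rewrite hD in Z1.
have Z2 : Dfun F ((-1) *: x + 0 *: y) (0 *: x + (-2) *: y) = ev env (Dex ((-1) * 1) ((-1) * 1) ((-1) * 1) ((-1) * 1) ((-1) * 1) ((-1) * (8 * 1)) ((-1) * (8 * (8 * 1))) ((-1) * (8 * 1)) 7 6 0 5 2 4 4 2).
  apply: DfunE.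
  by apply: (argnorm (a:=1) (b:=6) (homM hN (hom1 F))); lra.
  by apply: (argnorm (a:=3) (b:=2) (homM hN (hom1 F))); lra.
  by apply: (argnorm (a:=1) (b:=2) (homM hN (hom1 F))); lra.
  by apply: (argnorm (a:=1) (b:=(-2)) (homM hN (hom1 F))); lra.
  by apply: (argnorm (a:=1) (b:=0) (homM hN (hom1 F))); lra.
  by apply: (argnorm (a:=0) (b:=1) (homM hN (homM h2 (hom1 F)))); lra.
  by apply: (argnorm (a:=0) (b:=1) (homM hN (homM h2 (homM h2 (hom1 F))))); lra.
  by apply: (argnorm (a:=1) (b:=0) (homM hN (homM h2 (hom1 F)))); lra.
rewrite hD in Z2.
have Z3 : Dfun F (0 *: x + (-2) *: y) (1 *: x + 0 *: y) = ev env (Dex 1 1 1 ((-1) * 1) ((-1) * (8 * 1)) 1 (8 * 1) ((-1) * (8 * (8 * 1))) 8 9 5 0 4 2 2 4).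
  apply: DfunE.
  by apply: (argnorm (a:=3) (b:=(-2)) (hom1 F)); lra.
  by apply: (argnorm (a:=1) (b:=(-6)) (hom1 F)); lra.
  by apply: (argnorm (a:=1) (b:=(-2)) (hom1 F)); lra.
  by apply: (argnorm (a:=1) (b:=2) (homM hN (hom1 F))); lra.
  by apply: (argnorm (a:=0) (b:=1) (homM hN (homM h2 (hom1 F)))); lra.
  by apply: (argnorm (a:=1) (b:=0) (hom1 F)); lra.
  by apply: (argnorm (a:=1) (b:=0) (homM h2 (hom1 F))); lra.
  by apply: (argnorm (a:=0) (b:=1) (homM hN (homM h2 (homM h2 (hom1 F))))); lra.
rewrite hD in Z3.
have Z4 : Dfun F ((-1) *: x + 0 *: y) (0 *: x + 2 *: y) = ev env (Dex ((-1) * 1) ((-1) * 1) ((-1) * 1) ((-1) * 1) ((-1) * 1) (8 * 1) (8 * (8 * 1)) ((-1) * (8 * 1)) 9 8 5 0 2 4 4 2).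
  apply: DfunE.
  by apply: (argnorm (a:=1) (b:=(-6)) (homM hN (hom1 F))); lra.
  by apply: (argnorm (a:=3) (b:=(-2)) (homM hN (hom1 F))); lra.
  by apply: (argnorm (a:=1) (b:=(-2)) (homM hN (hom1 F))); lra.
  by apply: (argnorm (a:=1) (b:=2) (homM hN (hom1 F))); lra.
  by apply: (argnorm (a:=1) (b:=0) (homM hN (hom1 F))); lra.
  by apply: (argnorm (a:=0) (b:=1) (homM h2 (hom1 F))); lra.
  by apply: (argnorm (a:=0) (b:=1) (homM h2 (homM h2 (hom1 F)))); lra.
  by apply: (argnorm (a:=1) (b:=0) (homM hN (homM h2 (hom1 F)))); lra.
rewrite hD in Z4.
have Z5 : Dfun F ((-1) *: x + 1 *: y) (0 *: x + (-1) *: y) = ev env (Dex ((-1) * 1) ((-1) * 1) ((-1) * 1) ((-1) * 1) ((-1) * 1) ((-1) * 1) ((-1) * (8 * 1)) ((-1) * (8 * 1)) 0 8 2 5 3 4 4 3).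
  apply: DfunE.
  by apply: (argnorm (a:=1) (b:=2) (homM hN (hom1 F))); lra.
  by apply: (argnorm (a:=3) (b:=(-2)) (homM hN (hom1 F))); lra.
  by apply: (argnorm (a:=1) (b:=0) (homM hN (hom1 F))); lra.
  by apply: (argnorm (a:=1) (b:=(-2)) (homM hN (hom1 F))); lra.
  by apply: (argnorm (a:=1) (b:=(-1)) (homM hN (hom1 F))); lra.
  by apply: (argnorm (a:=0) (b:=1) (homM hN (hom1 F))); lra.
  by apply: (argnorm (a:=0) (b:=1) (homM hN (homM h2 (hom1 F)))); lra.
  by apply: (argnorm (a:=1) (b:=(-1)) (homM hN (homM h2 (hom1 F)))); lra.
rewrite hD in Z5.
have key : ev env (LS 384 (LP (LS 1 (LA 0)) (LP (LS (-3) (LA 1)) (LP (LS 3 (LA 2)) (LP (LS (-1) (LA 3)) (LS (-6) (LA 4))))))) = ev env (LP (LS 24 (Dex ((-1) * 1) ((-1) * 1) ((-1) * 1) ((-1) * 1) ((-1) * 1) 1 (8 * 1) ((-1) * (8 * 1)) 5 6 2 0 1 4 4 1)) (LP (LS 9 (Dex ((-1) * 1) ((-1) * 1) ((-1) * 1) 1 ((-1) * (8 * 1)) ((-1) * 1) ((-1) * (8 * 1)) ((-1) * (8 * (8 * 1))) 6 7 0 5 4 2 2 4)) (LP (LS 3 (Dex ((-1) * 1) ((-1) * 1) ((-1) * 1) ((-1) * 1) ((-1) * 1) ((-1) * (8 * 1)) ((-1) * (8 * (8 * 1))) ((-1) * (8 * 1)) 7 6 0 5 2 4 4 2)) (LP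 (LS (-3) (Dex 1 1 1 ((-1) * 1) ((-1) * (8 * 1)) 1 (8 * 1) ((-1) * (8 * (8 * 1))) 8 9 5 0 4 2 2 4)) (LP (LS 1 (Dex ((-1) * 1) ((-1) * 1) ((-1) * 1) ((-1) * 1) ((-1) * 1) (8 * 1) (8 * (8 * 1)) ((-1) * (8 * 1)) 9 8 5 0 2 4 4 2)) (LP (LS 8 (Dex ((-1) * 1) ((-1) * 1) ((-1) * 1) ((-1) * 1) ((-1) * 1) ((-1) * 1) ((-1) * (8 * 1)) ((-1) * (8 * 1)) 0 8 2 5 3 4 4 3)) LZ)))))).
  apply: (@ev_eq _ _ env _ _ 10) => //.
  move=> j hj; do 10! [case: j hj => [_|j hj]; first by rewrite /=; lra].
  by rewrite !ltnS ltn0 in hj.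
rewrite !ev_comb -Z0 -Z1 -Z2 -Z3 -Z4 -Z5 !scaler0 !add0r /= in key.
move/eqP: key; rewrite scaler_eq0 ?oner_eq0 ?pnatr_eq0 /= => /eqP h; exact: h.
Qed.

End Gen.
Arguments hom3_add {R X Y F}.
Arguments hom3_cub {R X Y F}.
Arguments add_core {R X Y F}.
Arguments cub_core {R X Y F}.
Section Alg2.
Variables (R : realType) (X Y : normedModType R).

Lemma additive_of (F : X -> Y) : (forall a b, Dfun F a b = 0) -> odd_fun F ->
  hmg F 2 2 -> additive_fun F.
Proof.
move=> hD ho h2.
have h3 : hmg F 3 3.
  move=> z; have := hom3_add z z hD (homN1 ho) (hom0 ho) (hom1 F) h2.
  rewrite !scale0r !addr0 !scale1r => /eqP; rewrite addr_eq0 => /eqP ->.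
  by rewrite scaleNr opprK.
move=> x y; have := add_core x y hD (homN1 ho) (hom0 ho) (hom1 F) h2 h3.
rewrite !scale0r !addr0 !add0r !scale1r !scaleN1r -opprD => /eqP.
by rewrite subr_eq0 => /eqP.
Qed.

Lemma cubic_of (F : X -> Y) : (forall a b, Dfun F a b = 0) -> odd_fun F ->
  hmg F 2 8 -> cubic_fun F.
Proof.
move=> hD ho h2.
have h3 : hmg F 3 27.
  move=> z; have := hom3_cub z z hD (homN1 ho) (hom0 ho) (hom1 F) h2.
  rewrite !scale0r !addr0 !scale1r => /eqP; rewrite addr_eq0 => /eqP ->.
  by rewrite scaleNr opprK.
move=> x y; have := cub_core x y hD (homN1 ho) (hom0 ho) (hom1 F) h2 h3.
rewrite !scale0r !addr0 !add0r !scale1r !scaleN1r !scaleNr => H.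
apply/eqP; rewrite -subr_eq0; apply/eqP; rewrite -[RHS]H !addrA.
done.
Qed.

End Alg2.

Section Ana.
Variables (R : realType) (Y : completeNormedModType R).

Lemma tele (u : nat -> Y) (a : nat -> R) :
  (forall n, 0 <= a n) -> (forall n, `|u n.+1 - u n| <= a n) ->
  (\sum_(0 <= i <oo) (a i)%:E < +oo)%E ->
  cvgn u /\ ((`|u 0%N - limn u|)%:E <= \sum_(0 <= i <oo) (a i)%:E)%E.
Proof.
move=> a0 hu fin.
pose d := fun n => u n.+1 - u n.
have ca : cvgn (series a) := nnseries_is_cvg a0 fin.
have cnd : cvgn [normed series d].
  apply: (series_le_cvg _ a0 _ ca) => n; first exact: normr_ge0.
  exact: hu.
have cd : cvgn (series d) := normed_cvg cnd.
have ser n : series d n = u n - u 0%N.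
  by rewrite /series /= /d telescope_sumr.
have ue : u = fun n => u 0%N + series d n.
  by apply/funext => n; rewrite ser addrC subrK.
have cu : cvgn u.
  rewrite ue; apply: is_cvgD; [exact: is_cvg_cst | exact: cd].
split => //.
have s0 : (0 <= \sum_(0 <= i <oo) (a i)%:E)%E.
  by apply: nneseries_ge0 => n _ _; rewrite lee_fin.
have bN N : ((`|u 0%N - u N|)%:E <= \sum_(0 <= i <oo) (a i)%:E)%E.
  apply: (le_trans _ (nneseries_lim_ge N _)); last by move=> n _ _; rewrite lee_fin.
  rewrite sumEFin lee_fin distrC -ser /series /=.
  apply: (le_trans (ler_norm_sum _ _ _)).
  by apply: ler_sum => k _; exact: hu.
move: fin s0 bN; case: (\sum_(0 <= i <oo) (a i)%:E)%E => // s _ s0 bN.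
rewrite lee_fin.
have cl : (fun N => `|u 0%N - u N|) @ \oo --> `|u 0%N - limn u|.
  apply: cvg_norm; apply: cvgB; [exact: cvg_cst | exact: cu].
rewrite -(cvg_lim _ cl) //; apply: limr_le; first by apply/cvg_ex; eexists; exact: cl.
by apply: nearW => N; rewrite -lee_fin; exact: bN.
Qed.

End Ana.
Section Seq.
Variables (R : realType) (X : normedModType R) (Y : completeNormedModType R).

Definition sU (c t : R) (G : X -> Y) (x : X) (n : nat) : Y := c ^+ n *: G ((t ^+ n)^-1 *: x).

Lemma sU0 c t G x : sU c t G x 0 = G x.
Proof. by rewrite /sU !expr0 invr1 !scale1r. Qed.

Lemma sU_shift c t G x n : t != 0 -> sU c t G x n.+1 = c *: sU c t G (t^-1 *: x) n.
Proof.
move=> ht; rewrite /sU exprS -scalerA exprSr invfM.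
by rewrite (scalerA (t ^- n)).
Qed.

Lemma sc1 (d k : R) (a b : X) : d *: (a + k *: b) = d *: a + k *: (d *: b).
Proof. by rewrite scalerDr !scalerA mulrC. Qed.
Lemma sc2 (d k : R) (a b : X) : d *: (k *: a + b) = k *: (d *: a) + d *: b.
Proof. by rewrite scalerDr !scalerA mulrC. Qed.
Lemma sc5 (d k : R) (a : X) : d *: (k *: a) = k *: (d *: a).
Proof. by rewrite !scalerA mulrC. Qed.

Lemma DfunZ (G : X -> Y) a b (k d : R) :
  Dfun (fun z => k *: G (d *: z)) a b = k *: Dfun G (d *: a) (d *: b).
Proof.
rewrite /Dfun (sc1 d 3 a b) (sc2 d 3 a b) (scalerDr d a b) (scalerBr d a b).
rewrite (sc5 d 2 b) (sc5 d 2 a).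
lin R.
Qed.

Lemma DfunG (f : X -> Y) (e : R) a b :
  Dfun (fun z => f (2 *: z) - e *: f z) a b = Dfun f (2 *: a) (2 *: b) - e *: Dfun f a b.
Proof.
rewrite /Dfun (sc1 2 3 a b) (sc2 2 3 a b) (scalerDr 2 a b) (scalerBr 2 a b).
rewrite (sc5 2 2 b) (sc5 2 2 a).
lin R.
Qed.

Lemma Dzz8 (f : X -> Y) w : odd_fun f ->
  Dfun f w w = 2 *: ((f (2 *: (2 *: w)) - 8 *: f (2 *: w)) - 2 *: (f (2 *: w) - 8 *: f w)).
Proof.
move=> ho; rewrite /Dfun subrr (odd0 ho).
have -> : w + 3 *: w = 2 *: (2 *: w).
  by rewrite scalerA -{1}(scale1r w) -scalerDl; congr (_ *: _); lra.
have -> : 3 *: w + w = 2 *: (2 *: w).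
  by rewrite scalerA -{2}(scale1r w) -scalerDl; congr (_ *: _); lra.
have -> : w + w = 2 *: w.
  by rewrite -{1 2}(scale1r w) -scalerDl; congr (_ *: _); lra.
lin R.
Qed.

Lemma Dzz2 (f : X -> Y) w : odd_fun f ->
  Dfun f w w = 2 *: ((f (2 *: (2 *: w)) - 2 *: f (2 *: w)) - 8 *: (f (2 *: w) - 2 *: f w)).
Proof.
move=> ho; rewrite /Dfun subrr (odd0 ho).
have -> : w + 3 *: w = 2 *: (2 *: w).
  by rewrite scalerA -{1}(scale1r w) -scalerDl; congr (_ *: _); lra.
have -> : 3 *: w + w = 2 *: (2 *: w).
  by rewrite scalerA -{2}(scale1r w) -scalerDl; congr (_ *: _); lra.
have -> : w + w = 2 *: w.
  by rewrite -{1 2}(scale1r w) -scalerDl; congr (_ *: _); lra.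
lin R.
Qed.

End Seq.
Arguments sU {R X Y}.
Arguments sc1 {R X}. Arguments sc2 {R X}. Arguments sc5 {R X}.
Section Cons.
Variables (R : realType) (X : normedModType R) (Y : completeNormedModType R).

Lemma cD (u v : nat -> Y) a b : u @ \oo --> a -> v @ \oo --> b ->
  (fun n => u n + v n) @ \oo --> a + b.
Proof. exact: cvgD. Qed.
Lemma cN (u : nat -> Y) a : u @ \oo --> a -> (fun n => - u n) @ \oo --> - a.
Proof. exact: cvgN. Qed.
Lemma cZ (k : R) (u : nat -> Y) a : u @ \oo --> a -> (fun n => k *: u n) @ \oo --> k *: a.
Proof. by move=> h; apply: cvgZ => //; exact: cvg_cst. Qed.

Lemma Dfun_cvg (U : nat -> X -> Y) (L : X -> Y) a b :
  (forall z, (fun n => U n z) @ \oo --> L z) ->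
  (fun n => Dfun (U n) a b) @ \oo --> Dfun L a b.
Proof.
move=> h; rewrite /Dfun.
by repeat first [apply: h | apply: cD | apply: cN | apply: cZ].
Qed.

Lemma uniqY {u : nat -> Y} {a b : Y} : u @ \oo --> a -> u @ \oo --> b -> a = b.
Proof.
move=> h1 h2.
have e1 : lim (u @ \oo) = a by apply: cvg_lim.
have e2 : lim (u @ \oo) = b by apply: cvg_lim.
by rewrite -e1 -e2.
Qed.

Lemma sq0 (u : nat -> Y) (v : nat -> R) : (forall n, `|u n| <= v n) ->
  v @ \oo --> 0 -> u @ \oo --> 0.
Proof.
move=> huv hv; apply: norm_cvg0.
apply: (@squeeze_cvgr _ _ _ _ (fun=> 0) v) => //; last exact: cvg_cst.
by apply: nearW => n; rewrite normr_ge0 huv.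
Qed.

Variables (c t : R) (G : X -> Y).
Hypothesis hcv : forall x, cvgn (sU c t G x).
Let L x := limn (sU c t G x).

Lemma L_shift x : t != 0 -> c *: L (t^-1 *: x) = L x.
Proof.
move=> ht.
have h1 : (fun n => sU c t G x n.+1) @ \oo --> L x.
  by rewrite (cvg_shiftS (sU c t G x)); exact: hcv.
have h2 : (fun n => sU c t G x n.+1) @ \oo --> c *: L (t^-1 *: x).
  under eq_fun => n do rewrite sU_shift //.
  by apply: cZ; exact: hcv.
have H := uniqY h2 h1; exact: H.
Qed.

Lemma L_odd : odd_fun G -> odd_fun L.
Proof.
move=> ho x.
have h1 : (fun n => - sU c t G x n) @ \oo --> L (- x).
  under eq_fun => n do rewrite /sU -scalerN -ho -scalerN.
  exact: hcv.
have h2 : (fun n => - sU c t G x n) @ \oo --> - L x.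
  by apply: cN; exact: hcv.
have H := uniqY h1 h2; exact: H.
Qed.

Lemma L_D0 : (forall a b, (fun n => c ^+ n *: Dfun G ((t ^+ n)^-1 *: a) ((t ^+ n)^-1 *: b)) @ \oo --> 0) ->
  forall a b, Dfun L a b = 0.
Proof.
move=> h a b.
have h1 : (fun n => Dfun (fun z => sU c t G z n) a b) @ \oo --> Dfun L a b.
  by apply: Dfun_cvg => z; exact: hcv.
have h2 : (fun n => Dfun (fun z => sU c t G z n) a b) @ \oo --> 0.
  under eq_fun => n do rewrite /sU DfunZ.
  exact: h.
have H := uniqY h1 h2; exact: H.
Qed.

End Cons.
Section Step.
Variables (R : realType) (X : normedModType R) (Y : completeNormedModType R).
Variables (f : X -> Y) (phi : X -> X -> R).
Hypothesis hD : forall x y, `|Dfun f x y| <= phi x y.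

Lemma LimDG (c t e : R) : 0 <= c ->
  (forall x y, (c ^+ n * phi ((t ^+ n)^-1 *: x) ((t ^+ n)^-1 *: y)) @[n --> \oo] --> 0) ->
  forall a b, (fun n => c ^+ n *: Dfun (fun z => f (2 *: z) - e *: f z)
      ((t ^+ n)^-1 *: a) ((t ^+ n)^-1 *: b)) @ \oo --> 0.
Proof.
move=> c0 hl a b.
apply: (@sq0 R Y _ (fun n => c ^+ n * phi ((t ^+ n)^-1 *: (2 *: a)) ((t ^+ n)^-1 *: (2 *: b))
   + `|e| * (c ^+ n * phi ((t ^+ n)^-1 *: a) ((t ^+ n)^-1 *: b)))).
  move=> n; rewrite DfunG normrZ ger0_norm ?exprn_ge0 // (sc5 _ 2 a) (sc5 _ 2 b).
  rewrite (mulrCA `|e|) -mulrDr; apply: ler_wpM2l; first exact: exprn_ge0.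
  apply: (le_trans (ler_normB _ _)); rewrite normrZ; apply: lerD => //.
  by apply: ler_wpM2l => //.
rewrite -[0]addr0; apply: cvgD; first exact: hl.
by rewrite -(mulr0 `|e|); apply: cvgMl_tmp; exact: hl.
Qed.

Lemma step_up (G : X -> Y) (k : R) : 0 <= k ->
  (forall w, Dfun f w w = 2 *: (G (2 *: w) - k *: G w)) ->
  forall x n, `|sU k 2 G x n.+1 - sU k 2 G x n| <=
    2^-1 * (k ^+ n * phi ((2 ^+ n.+1)^-1 *: x) ((2 ^+ n.+1)^-1 *: x)).
Proof.
move=> k0 hz x n.
set w := (2 ^+ n.+1)^-1 *: x.
have e1 : (2 ^+ n)^-1 *: x = 2 *: w :> X.
  rewrite /w scalerA; congr (_ *: _); rewrite exprS invfM mulrA divff ?mul1r //.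
rewrite /sU e1 -/w.
have -> : k ^+ n.+1 *: G w - k ^+ n *: G (2 *: w) = (- (k ^+ n / 2)) *: Dfun f w w.
  rewrite hz exprS; lin R.
rewrite normrZ normrN ger0_norm; last by rewrite divr_ge0 ?exprn_ge0.
rewrite mulrA (mulrC (2^-1)); apply: ler_wpM2l; last exact: hD.
by rewrite divr_ge0 ?exprn_ge0.
Qed.

Lemma step_down (G : X -> Y) (k : R) : 0 < k ->
  (forall w, Dfun f w w = 2 *: (G (2 *: w) - k *: G w)) ->
  forall x n, `|sU k^-1 2^-1 G x n.+1 - sU k^-1 2^-1 G x n| <=
    2^-1 * ((k ^+ n.+1)^-1 * phi (2 ^+ n *: x) (2 ^+ n *: x)).
Proof.
move=> k0 hz x n.
set z := 2 ^+ n *: x.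
have e1 : ((2^-1) ^+ n.+1)^-1 *: x = 2 *: z :> X.
  by rewrite /z exprVn invrK scalerA exprS.
have e2 : ((2^-1) ^+ n)^-1 *: x = z :> X by rewrite /z exprVn invrK.
rewrite /sU e1 e2.
have -> : k^-1 ^+ n.+1 *: G (2 *: z) - k^-1 ^+ n *: G z = ((k ^+ n.+1)^-1 / 2) *: Dfun f z z.
  have kn0 : k != 0 by rewrite gt_eqF.
  rewrite hz !exprVn exprS; lin R.
rewrite normrZ ger0_norm; last by rewrite divr_ge0 ?invr_ge0 ?exprn_ge0 // ltW.
rewrite mulrA (mulrC (2^-1)); apply: ler_wpM2l; last exact: hD.
by rewrite divr_ge0 ?invr_ge0 ?exprn_ge0 // ltW.
Qed.

End Step.
Section Misc.
Variables (R : realType) (X : normedModType R) (Y : completeNormedModType R).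

Lemma hom_of_shift (L : X -> Y) (c t k : R) : k != 0 ->
  (t = 2 /\ c = k) \/ (t = 2^-1 /\ c = k^-1) ->
  (forall x, c *: L (t^-1 *: x) = L x) -> hmg L 2 k.
Proof.
move=> k0 [[-> ->]|[-> ->]] h z.
  by rewrite -[in LHS]h scalerA mulVf ?pnatr_eq0 // scale1r.
by rewrite -(h z) invrK scalerA divff // scale1r.
Qed.

Lemma shift_of_hom (F : X -> Y) (c t k : R) : k != 0 ->
  (t = 2 /\ c = k) \/ (t = 2^-1 /\ c = k^-1) ->
  hmg F 2 k -> forall x, c *: F (t^-1 *: x) = F x.
Proof.
move=> k0 [[-> ->]|[-> ->]] h z.
  by rewrite -h scalerA divff ?pnatr_eq0 // scale1r.
by rewrite invrK h scalerA mulVf // scale1r.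
Qed.

Lemma sU_fix (F : X -> Y) (c t : R) : t != 0 ->
  (forall x, c *: F (t^-1 *: x) = F x) -> forall n x, sU c t F x n = F x.
Proof.
move=> t0 h; elim=> [|n ih] x; first by rewrite sU0.
by rewrite sU_shift // ih h.
Qed.

Lemma additive_hom (A : X -> Y) : additive_fun A -> hmg A 2 2.
Proof.
move=> hA z; rewrite -[2]/(1 + 1) !scalerDl !scale1r; exact: hA.
Qed.

Lemma cubic_props (C : X -> Y) : cubic_fun C -> odd_fun C /\ hmg C 2 8.
Proof.
move=> hC.
have C0 : C 0 = 0.
  have := hC 0 0; rewrite scaler0 !addr0 subrr => e.
  have : (6 : R) *: C 0 = 0.
    by rewrite -e; lin R.
  by move/eqP; rewrite scaler_eq0 pnatr_eq0 /= => /eqP.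
have v1 (y : X) : - y + 2 *: y = y.
  by rewrite -[2]/(1 + 1) scalerDl scale1r addKr.
have v2 (y : X) : - y - y = - (2 *: y).
  by rewrite -[2]/(1 + 1) scalerDl scale1r opprD.
have od : odd_fun C.
  move=> y.
  have e1 := hC 0 y; rewrite add0r add0r sub0r C0 in e1.
  have e2 := hC 0 (- y); rewrite add0r add0r sub0r opprK C0 scalerN in e2.
  have e3 := hC (- y) y; rewrite v1 addNr v2 C0 in e3.
  have : (6 : R) *: (C (- y) + C y) = 0.
    have -> : (6 : R) *: (C (- y) + C y) =
      - ((C (- (2 *: y)) - 3 *: C (- y) + 3 *: 0 - C y - 6 *: C (- y))
      + (C y - 3 *: 0 + 3 *: C (- y) - C (- (2 *: y)) - 6 *: C y)) by lin R.
    by rewrite e2 e3 !subrr addr0 oppr0.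
  by move/eqP; rewrite scaler_eq0 pnatr_eq0 /= addr_eq0 => /eqP.
split => // z.
have e1 := hC 0 z; rewrite add0r add0r sub0r C0 od in e1.
apply/eqP; rewrite -subr_eq0; apply/eqP.
have -> : C (2 *: z) - 8 *: C z =
  (C (2 *: z) - 3 *: C z + 3 *: 0 - - C z) - 6 *: C z by lin R.
by rewrite e1 subrr.
Qed.

End Misc.
Section LimQ.
Variables (R : realType) (X : normedModType R).
Local Open Scope ereal_scope.

Lemma Sfin {Q : X -> nat -> R} {x} : (forall x n, (0 <= Q x n)%R) ->
  \sum_(0 <= n <oo) (Q x n)%:E < +oo ->
  \sum_(0 <= n <oo) (Q x n)%:E = (fine (\sum_(0 <= n <oo) (Q x n)%:E))%:E.
Proof.
move=> Q0 hf; rewrite fineK // ge0_fin_numE //.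
by apply: nneseries_ge0 => n _ _; rewrite lee_fin.
Qed.

Lemma LimQ (c t : R) (Q : X -> nat -> R) : (0 <= c)%R ->
  (forall x n, (0 <= Q x n)%R) ->
  (forall x, \sum_(0 <= n <oo) (Q x n)%:E < +oo) ->
  (forall x m n, (c ^+ m * Q ((t ^+ m)^-1 *: x) n <= 2 * Q x (n + m))%R) ->
  forall z, (fun m => c ^+ m * fine (\sum_(0 <= n <oo) (Q ((t ^+ m)^-1 *: z) n)%:E))%R
     @ \oo --> 0%R.
Proof.
move=> c0 Q0 Qf Qs z.
have fin2 : \sum_(0 <= k <oo) (2 * Q z k)%:E < +oo.
  rewrite (eq_eseriesr (fun k _ => EFinM 2 (Q z k))) nneseriesZl; last first.
    by move=> i _; rewrite lee_fin.
  by rewrite (Sfin Q0 (Qf z)) -EFinM ltry.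
have T0 : (fun m => \sum_(m <= j <oo) (2 * Q z j)%:E) @ \oo --> 0.
  have := @nneseries_tail_cvg R (fun j => (2 * Q z j)%:E) xpredT fin2.
  apply => k _; rewrite lee_fin mulr_ge0 //.
have hle m : ((c ^+ m * fine (\sum_(0 <= n <oo) (Q ((t ^+ m)^-1 *: z) n)%:E))%:E
    <= \sum_(m <= j <oo) (2 * Q z j)%:E).
  rewrite EFinM -(Sfin Q0 (Qf _)) -nneseriesZl; last by move=> i _; rewrite lee_fin.
  rewrite -(@nneseries_addn _ (fun j => (2 * Q z j)%:E) m); last first.
    by move=> i; rewrite lee_fin mulr_ge0.
  apply: lee_nneseries => [i _ _|n _]; first by rewrite -EFinM lee_fin mulr_ge0 ?exprn_ge0.
  by rewrite -EFinM lee_fin.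
have hE : (fun m => (c ^+ m * fine (\sum_(0 <= n <oo) (Q ((t ^+ m)^-1 *: z) n)%:E))%:E)
    @ \oo --> 0.
  apply: (squeeze_cvge _ (cvg_cst 0) T0); apply: nearW => m.
  rewrite hle andbT lee_fin mulr_ge0 ?exprn_ge0 // fine_ge0 //.
  by apply: nneseries_ge0 => n _ _; rewrite lee_fin.
by have [_] := (fine_cvgP _ 0%R).1 hE.
Qed.

End LimQ.
Arguments tele {R Y}.
Arguments L_D0 {R X Y c t G}.
Arguments L_odd {R X Y c t G}.
Arguments L_shift {R X Y c t G}.
Arguments LimDG {R X Y f phi}.
Arguments step_up {R X Y f phi}.
Arguments step_down {R X Y f phi}.
Arguments sU_fix {R X Y}.
Arguments hom_of_shift {R X Y}.
Arguments shift_of_hom {R X Y}.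
Arguments LimQ {R X}.
Arguments cubic_props {R X Y}.
Arguments additive_hom {R X Y}.
Arguments Dzz8 {R X Y}.
Arguments Dzz2 {R X Y}.
Arguments uniqY {R Y}.
Arguments sq0 {R Y}.
Lemma cvgR2 (R : realType) (u v : nat -> R) (a b : R) : u @ \oo --> 0 -> v @ \oo --> 0 ->
  (fun n => a * u n + b * v n) @ \oo --> 0.
Proof.
move=> hu hv.
rewrite -[0]addr0; apply: cvgD.
  by rewrite -(mulr0 a); apply: cvgMl_tmp.
by rewrite -(mulr0 b); apply: cvgMl_tmp.
Qed.
Arguments cvgR2 {R}.
Arguments cD {R Y}. Arguments cN {R Y}. Arguments cZ {R Y}.

Section Core.
Variables (R : realType) (X : normedModType R) (Y : completeNormedModType R).
Variables (f : X -> Y) (phi : X -> X -> R).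
Hypotheses (ho : odd_fun f) (phi0 : forall x y, 0 <= phi x y)
  (hD : forall x y, `|Dfun f x y| <= phi x y).
Variables (t cA cC : R) (Q psA psC : X -> nat -> R).
Let g := fun z => f (2 *: z) - 8 *: f z.
Let h := fun z => f (2 *: z) - 2 *: f z.
Hypotheses
  (hcase : (t = 2 /\ cA = 2 /\ cC = 8) \/ (t = 2^-1 /\ cA = 2^-1 /\ cC = 8^-1))
  (psA0 : forall x n, 0 <= psA x n) (psC0 : forall x n, 0 <= psC x n)
  (stepA : forall x n, `|sU cA t g x n.+1 - sU cA t g x n| <= 2^-1 * psA x n)
  (stepC : forall x n, `|sU cC t h x n.+1 - sU cC t h x n| <= 2^-1 * psC x n)
  (Qdef : forall x n, Q x n = psA x n + psC x n)
  (Qfin : forall x, (\sum_(0 <= n <oo) (Q x n)%:E < +oo)%E)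
  (HLA : forall x y, (cA ^+ n * phi ((t ^+ n)^-1 *: x) ((t ^+ n)^-1 *: y)) @[n --> \oo] --> 0)
  (HLC : forall x y, (cC ^+ n * phi ((t ^+ n)^-1 *: x) ((t ^+ n)^-1 *: y)) @[n --> \oo] --> 0)
  (QsA : forall x m n, cA ^+ m * Q ((t ^+ m)^-1 *: x) n <= 2 * Q x (n + m))
  (QsC : forall x m n, cC ^+ m * Q ((t ^+ m)^-1 *: x) n <= 2 * Q x (n + m)).

Let t0 : t != 0.
Proof. by case: hcase => [[-> _]|[-> _]]; rewrite ?invr_eq0 pnatr_eq0. Qed.
Let cA0 : 0 < cA.
Proof. by case: hcase => [[_ [-> _]]|[_ [-> _]]]; rewrite ?invr_gt0. Qed.
Let cC0 : 0 < cC.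
Proof. by case: hcase => [[_ [_ ->]]|[_ [_ ->]]]; rewrite ?invr_gt0. Qed.

Let Q0 x n : 0 <= Q x n.
Proof. by rewrite Qdef addr_ge0. Qed.

Let finA x : (\sum_(0 <= n <oo) (2^-1 * psA x n)%:E < +oo)%E.
Proof.
apply: le_lt_trans (Qfin x); apply: lee_nneseries => [n _ _|n _].
  by rewrite lee_fin mulr_ge0.
by rewrite lee_fin Qdef; have := psC0 x n; have := psA0 x n; lra.
Qed.

Let finC x : (\sum_(0 <= n <oo) (2^-1 * psC x n)%:E < +oo)%E.
Proof.
apply: le_lt_trans (Qfin x); apply: lee_nneseries => [n _ _|n _].
  by rewrite lee_fin mulr_ge0.
by rewrite lee_fin Qdef; have := psC0 x n; have := psA0 x n; lra.
Qed.

Let hlf x n : 0 <= 2^-1 * psA x n.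
Proof. by rewrite mulr_ge0. Qed.
Let hlfC x n : 0 <= 2^-1 * psC x n.
Proof. by rewrite mulr_ge0. Qed.

Let gD w : Dfun f w w = 2 *: (g (2 *: w) - 2 *: g w).
Proof. exact: Dzz8. Qed.
Let hDz w : Dfun f w w = 2 *: (h (2 *: w) - 8 *: h w).
Proof. exact: Dzz2. Qed.

Let godd : odd_fun g.
Proof. by move=> z; rewrite /g scalerN !ho opprB -scalerN opprK addrC. Qed.
Let hodd : odd_fun h.
Proof. by move=> z; rewrite /h scalerN !ho opprB -scalerN opprK addrC. Qed.

Theorem core : exists A C : X -> Y,
  [/\ additive_fun A, cubic_fun C,
      (forall x, ((`|f x - A x - C x|)%:E <= (12^-1)%:E * \sum_(0 <= n <oo) (Q x n)%:E)%E) &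
      forall A' C' : X -> Y, additive_fun A' -> cubic_fun C' ->
        (forall x, ((`|f x - A' x - C' x|)%:E <= (12^-1)%:E * \sum_(0 <= n <oo) (Q x n)%:E)%E) ->
        A' = A /\ C' = C].
Proof.
have tA x := tele (sU cA t g x) (fun n => 2^-1 * psA x n) (hlf x) (stepA x) (finA x).
have tC x := tele (sU cC t h x) (fun n => 2^-1 * psC x n) (hlfC x) (stepC x) (finC x).
pose LA x := limn (sU cA t g x).
pose LC x := limn (sU cC t h x).
have cvA x : cvgn (sU cA t g x) by have [] := tA x.
have cvC x : cvgn (sU cC t h x) by have [] := tC x.
have bA x : ((`|g x - LA x|)%:E <= \sum_(0 <= n <oo) (2^-1 * psA x n)%:E)%E.
  by have [_] := tA x; rewrite sU0.
have bC x : ((`|h x - LC x|)%:E <= \sum_(0 <= n <oo) (2^-1 * psC x n)%:E)%E.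
  by have [_] := tC x; rewrite sU0.
have addLA : additive_fun LA.
  apply: additive_of.
  - apply: (L_D0 cvA); apply: LimDG => //; exact: ltW.
  - exact: L_odd.
  - apply: (hom_of_shift _ cA t).
    + by rewrite pnatr_eq0.
    + by case: hcase => [[-> [-> _]]|[-> [-> _]]]; [left|right].
    + by move=> x; apply: L_shift.
have cubLC : cubic_fun LC.
  apply: cubic_of.
  - apply: (L_D0 cvC); apply: LimDG => //; exact: ltW.
  - exact: L_odd.
  - apply: (hom_of_shift _ cC t).
    + by rewrite pnatr_eq0.
    + by case: hcase => [[-> [_ ->]]|[-> [_ ->]]]; [left|right].
    + by move=> x; apply: L_shift.
pose A x := (- 6^-1) *: LA x.
pose C x := 6^-1 *: LC x.
exists A, C; split.
- by move=> x y; rewrite /A addLA scalerDr.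
- move=> x y; rewrite /C.
  transitivity (6^-1 *: (LC (x + 2 *: y) - 3 *: LC (x + y) + 3 *: LC x - LC (x - y))).
    by lin R.
  by rewrite cubLC; lin R.
- move=> x.
  have -> : f x - A x - C x = 6^-1 *: ((h x - LC x) - (g x - LA x)).
    by rewrite /A /C /g /h; lin R.
  rewrite normrZ ger0_norm ?invr_ge0 //.
  apply: (@le_trans _ _ ((6^-1)%:E * ((`|h x - LC x|)%:E + (`|g x - LA x|)%:E))%E).
    by rewrite -EFinD -EFinM lee_fin ler_wpM2l ?invr_ge0 // ler_normB.
  apply: (@le_trans _ _ ((6^-1)%:E * (\sum_(0 <= n <oo) (2^-1 * psC x n)%:E
                                   + \sum_(0 <= n <oo) (2^-1 * psA x n)%:E))%E).
    by apply: lee_wpmul2l; [rewrite lee_fin invr_ge0 | exact: leeD].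
  rewrite -nneseriesD; last 2 first.
  - by move=> n _ _; rewrite lee_fin.
  - by move=> n _ _; rewrite lee_fin.
  have -> : (\sum_(0 <= n <oo) ((2^-1 * psC x n)%:E + (2^-1 * psA x n)%:E) =
      (2^-1)%:E * \sum_(0 <= n <oo) (Q x n)%:E)%E.
    rewrite -nneseriesZl; last by move=> n _; rewrite lee_fin.
    by apply: eq_eseriesr => n _; rewrite -EFinD -EFinM Qdef mulrDr addrC.
  have h12 : (6^-1 * 2^-1 : R) = 12^-1 by field.
  by rewrite muleA -EFinM h12.
- move=> A' C' hA' hC' hb.
  have hA2 := additive_hom A' hA'.
  have [oC hC2] := cubic_props C' hC'.
  pose E z := f z - A' z - C' z.
  have bE z : `|E z| <= 12^-1 * fine (\sum_(0 <= n <oo) (Q z n)%:E)%E.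
    by have := hb z; rewrite (@Sfin R X Q z Q0 (Qfin z)) -EFinM lee_fin.
  have h20 : (2 : R) != 0 by rewrite pnatr_eq0.
  have h80 : (8 : R) != 0 by rewrite pnatr_eq0.
  have fixA := sU_fix A' cA t t0 (shift_of_hom A' cA t 2 h20
     ltac:(by case: hcase => [[-> [-> _]]|[-> [-> _]]]; [left|right]) hA2).
  have fixC := sU_fix C' cC t t0 (shift_of_hom C' cC t 8 h80
     ltac:(by case: hcase => [[-> [_ ->]]|[-> [_ ->]]]; [left|right]) hC2).
  have LAe x : LA x = (-6) *: A' x.
    have key n : sU cA t g x n - (-6) *: A' x =
        cA ^+ n *: (E (2 *: ((t ^+ n)^-1 *: x)) - 8 *: E ((t ^+ n)^-1 *: x)).
      by rewrite -{1}(fixA n x) /sU /E /g hA2 hC2; lin R.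
    have c0 : (fun n => sU cA t g x n - (-6) *: A' x) @ \oo --> 0.
      apply: (sq0 _ (fun n => 12^-1 * (cA ^+ n * fine (\sum_(0 <= k <oo) (Q ((t ^+ n)^-1 *: (2 *: x)) k)%:E)%E)
          + (8 * 12^-1) * (cA ^+ n * fine (\sum_(0 <= k <oo) (Q ((t ^+ n)^-1 *: x) k)%:E)%E))).
        move=> n; rewrite key normrZ (ger0_norm (exprn_ge0 _ (ltW cA0))) (sc5 _ 2 x).
        rewrite (mulrCA 12^-1) (mulrCA (8 * 12^-1)) -mulrDr.
        apply: ler_wpM2l; first by rewrite exprn_ge0 // ltW.
        apply: (le_trans (ler_normB _ _)); rewrite normrZ; apply: lerD; first exact: bE.
        rewrite ger0_norm ?ler0n // -mulrA; apply: ler_wpM2l; [by rewrite ler0n | exact: bE].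
      exact: (cvgR2 _ _ _ _ (LimQ _ _ Q (ltW cA0) Q0 Qfin QsA (2 *: x))
                         (LimQ _ _ Q (ltW cA0) Q0 Qfin QsA x)).
    have c1 : sU cA t g x @ \oo --> (-6) *: A' x.
      have H : (fun n => sU cA t g x n - (-6) *: A' x + (-6) *: A' x) @ \oo --> 0 + (-6) *: A' x.
        by apply: cD => //; exact: cvg_cst.
      rewrite add0r in H; move: H.
      by under eq_fun => n do rewrite subrK.
    exact: uniqY (cvA x) c1.
  have LCe x : LC x = 6 *: C' x.
    have key n : sU cC t h x n - 6 *: C' x =
        cC ^+ n *: (E (2 *: ((t ^+ n)^-1 *: x)) - 2 *: E ((t ^+ n)^-1 *: x)).
      by rewrite -{1}(fixC n x) /sU /E /h hA2 hC2; lin R.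
    have c0 : (fun n => sU cC t h x n - 6 *: C' x) @ \oo --> 0.
      apply: (sq0 _ (fun n => 12^-1 * (cC ^+ n * fine (\sum_(0 <= k <oo) (Q ((t ^+ n)^-1 *: (2 *: x)) k)%:E)%E)
          + (2 * 12^-1) * (cC ^+ n * fine (\sum_(0 <= k <oo) (Q ((t ^+ n)^-1 *: x) k)%:E)%E))).
        move=> n; rewrite key normrZ (ger0_norm (exprn_ge0 _ (ltW cC0))) (sc5 _ 2 x).
        rewrite (mulrCA 12^-1) (mulrCA (2 * 12^-1)) -mulrDr.
        apply: ler_wpM2l; first by rewrite exprn_ge0 // ltW.
        apply: (le_trans (ler_normB _ _)); rewrite normrZ; apply: lerD; first exact: bE.
        rewrite ger0_norm ?ler0n // -mulrA; apply: ler_wpM2l; [by rewrite ler0n | exact: bE].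
      exact: (cvgR2 _ _ _ _ (LimQ _ _ Q (ltW cC0) Q0 Qfin QsC (2 *: x))
                         (LimQ _ _ Q (ltW cC0) Q0 Qfin QsC x)).
    have c1 : sU cC t h x @ \oo --> 6 *: C' x.
      have H : (fun n => sU cC t h x n - 6 *: C' x + 6 *: C' x) @ \oo --> 0 + 6 *: C' x.
        by apply: cD => //; exact: cvg_cst.
      rewrite add0r in H; move: H.
      by under eq_fun => n do rewrite subrK.
    exact: uniqY (cvC x) c1.
  split; apply/funext => x.
    by rewrite /A LAe scalerA mulrNN mulVf ?scale1r ?pnatr_eq0.
  by rewrite /C LCe scalerA mulVf ?scale1r ?pnatr_eq0.
Qed.
End Core.
Section Fin.
Variable (R : realType).

Lemma ez (x : R) (z : int) (n : nat) : z = n%:Z -> x ^ z = x ^+ n.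
Proof. by move=> ->. Qed.

Lemma ezN (x : R) (z : int) (n : nat) : z = - n%:Z -> x ^ z = (x ^+ n)^-1.
Proof. by move=> ->; rewrite -exprnN. Qed.

Lemma pw_le (a b : R) m : 0 <= a -> a <= b -> a ^+ m <= b ^+ m.
Proof.
move=> a0 ab; elim: m => [|m ih]; first by rewrite !expr0.
by rewrite !exprS; apply: ler_pM => //; exact: exprn_ge0.
Qed.

Local Open Scope ereal_scope.

Lemma fin_scale (c : R) (s : \bar R) : (0 <= c)%R -> 0 <= s -> s < +oo -> c%:E * s < +oo.
Proof.
move=> c0 s0; case: s s0 => [s| |] //= s0 _.
by rewrite -EFinM ltry.
Qed.

Lemma sum_sc (b a : nat -> R) (c : R) N : (0 <= c)%R -> (forall n, 0 <= a n)%R ->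
  (forall n, b n = c * a n)%R ->
  \sum_(N <= n <oo) (b n)%:E = c%:E * \sum_(N <= n <oo) (a n)%:E.
Proof.
move=> c0 a0 hb; rewrite -nneseriesZl; last by move=> n _; rewrite lee_fin.
by apply: eq_eseriesr => n _; rewrite hb EFinM.
Qed.

End Fin.
Arguments core {R X Y}. Arguments ez {R}. Arguments ezN {R}. Arguments pw_le {R}. Arguments fin_scale {R}. Arguments sum_sc {R}.
Lemma sc_id (R : realType) (c p P : R) : c != 0 -> p * P = c^-1 * (c * p * P).
Proof. by move=> c0; rewrite !mulrA mulVf ?mul1r. Qed.
Lemma inv_le (R : realType) (a b : R) : 0 < a -> a <= b -> b^-1 <= a^-1.
Proof.
move=> a0 ab; have b0 : 0 < b by apply: lt_le_trans ab.
by rewrite lef_pV2 ?posrE.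
Qed.

Lemma case1 (R : realType) (X : normedModType R)
  (Y : completeNormedModType R) (l : int) (f : X -> Y) (phi : X -> X -> R) :
  l = 1 ->
  odd_fun f ->
  (forall x y, 0 <= phi x y) ->
  (forall x y, `|Dfun f x y| <= phi x y) ->
  (forall x : X, (\sum_(1 <= i <oo)
      ((2 : R) ^ (i%:Z * l) * phi ((2 ^ (i%:Z * l))^-1 *: x) ((2 ^ (i%:Z * l))^-1 *: x))%:E
      < +oo)%E) ->
  (forall x : X, (\sum_(1 <= i <oo)
      ((8 : R) ^ (i%:Z * l) * phi ((2 ^ (i%:Z * l))^-1 *: x) ((2 ^ (i%:Z * l))^-1 *: x))%:E
      < +oo)%E) ->
  (forall x y : X, ((2 : R) ^ (n%:Z * l) * phi ((2 ^ (n%:Z * l))^-1 *: x)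
                      ((2 ^ (n%:Z * l))^-1 *: y)) @[n --> \oo] --> 0) ->
  (forall x y : X, ((8 : R) ^ (n%:Z * l) * phi ((2 ^ (n%:Z * l))^-1 *: x)
                      ((2 ^ (n%:Z * l))^-1 *: y)) @[n --> \oo] --> 0) ->
  let bound (A C : X -> Y) := forall x : X,
    ((`|f x - A x - C x|)%:E <= (12%:R^-1 : R)%:E *
      \sum_((`|l - 1|%N %/ 2)%N <= i <oo)
        (((2 : R) ^ (i%:Z * l) + (8 : R) ^ (i%:Z * l)) *
          phi ((2 ^ (l * (i%:Z + l)))^-1 *: x) ((2 ^ (l * (i%:Z + l)))^-1 *: x))%:E)%E in
  exists A C : X -> Y,
    [/\ additive_fun A, cubic_fun C, bound A C &
      forall A' C' : X -> Y, additive_fun A' -> cubic_fun C' -> bound A' C' ->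
        A' = A /\ C' = C].
Proof.
move=> -> ho phi0 hD S2 S8 L2 L8 bound.
pose w (x : X) n := (2 ^+ n.+1)^-1 *: x.
pose psA x n := 2 ^+ n * phi (w x n) (w x n).
pose psC x n := 8 ^+ n * phi (w x n) (w x n).
pose Q x n := psA x n + psC x n.
have e1 (i : nat) : i%:Z * 1 = i%:Z by rewrite mulr1.
have psA0 x n : 0 <= psA x n by rewrite mulr_ge0 ?exprn_ge0.
have psC0 x n : 0 <= psC x n by rewrite mulr_ge0 ?exprn_ge0.
have Qfin x : (\sum_(0 <= n <oo) (Q x n)%:E < +oo)%E.
  rewrite (eq_eseriesr (fun n _ => EFinD (psA x n) (psC x n))).
  rewrite nneseriesD; last 2 first.
  - by move=> n _ _; rewrite lee_fin.
  - by move=> n _ _; rewrite lee_fin.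
  apply: lte_add_pinfty.
  - rewrite (sum_sc _ (fun n => 2 ^ ((n + 1)%N%:Z * 1) * phi ((2 ^ ((n + 1)%N%:Z * 1))^-1 *: x)
                 ((2 ^ ((n + 1)%N%:Z * 1))^-1 *: x)) (2^-1)) //.
    + apply: fin_scale => //.
        by apply: nneseries_ge0 => n _ _; rewrite lee_fin mulr_ge0 ?exprz_ge0.
      by rewrite (nneseries_addn 1 (f := fun i => (2 ^ (i%:Z * 1) * phi ((2 ^ (i%:Z * 1))^-1 *: x)
                 ((2 ^ (i%:Z * 1))^-1 *: x))%:E)) //; move=> i; rewrite lee_fin mulr_ge0 ?exprz_ge0.
    + by move=> n; rewrite mulr_ge0 ?exprz_ge0.
    + move=> n; rewrite /psA /w !(ez _ _ n.+1) ?e1 ?addn1 //.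
      by rewrite exprS; apply: (@sc_id R 2 (2 ^+ n)); rewrite pnatr_eq0.
  - rewrite (sum_sc _ (fun n => 8 ^ ((n + 1)%N%:Z * 1) * phi ((2 ^ ((n + 1)%N%:Z * 1))^-1 *: x)
                 ((2 ^ ((n + 1)%N%:Z * 1))^-1 *: x)) (8^-1)) //.
    + apply: fin_scale => //.
        by apply: nneseries_ge0 => n _ _; rewrite lee_fin mulr_ge0 ?exprz_ge0.
      by rewrite (nneseries_addn 1 (f := fun i => (8 ^ (i%:Z * 1) * phi ((2 ^ (i%:Z * 1))^-1 *: x)
                 ((2 ^ (i%:Z * 1))^-1 *: x))%:E)) //; move=> i; rewrite lee_fin mulr_ge0 ?exprz_ge0.
    + by move=> n; rewrite mulr_ge0 ?exprz_ge0.
    + move=> n; rewrite /psC /w !(ez _ _ n.+1) ?e1 ?addn1 //.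
      by rewrite [8 ^+ n.+1]exprS; apply: (@sc_id R 8 (8 ^+ n)); rewrite pnatr_eq0.
have stepA x n : `|sU 2 2 (fun z => f (2 *: z) - 8 *: f z) x n.+1
    - sU 2 2 (fun z => f (2 *: z) - 8 *: f z) x n| <= 2^-1 * psA x n.
  exact: (step_up hD _ 2 (ler0n _ 2) (fun w => Dzz8 f w ho)).
have stepC x n : `|sU 8 2 (fun z => f (2 *: z) - 2 *: f z) x n.+1
    - sU 8 2 (fun z => f (2 *: z) - 2 *: f z) x n| <= 2^-1 * psC x n.
  exact: (step_up hD _ 8 (ler0n _ 8) (fun w => Dzz2 f w ho)).
have HLA x y : (2 ^+ n * phi ((2 ^+ n)^-1 *: x) ((2 ^+ n)^-1 *: y)) @[n --> \oo] --> 0.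
  have := L2 x y.
  have -> : (fun n : nat => 2 ^ (n%:Z * 1) * phi ((2 ^ (n%:Z * 1))^-1 *: x) ((2 ^ (n%:Z * 1))^-1 *: y))
     = (fun n => 2 ^+ n * phi ((2 ^+ n)^-1 *: x) ((2 ^+ n)^-1 *: y)) by apply/funext => n; rewrite e1.
  done.
have HLC x y : (8 ^+ n * phi ((2 ^+ n)^-1 *: x) ((2 ^+ n)^-1 *: y)) @[n --> \oo] --> 0.
  have := L8 x y.
  have -> : (fun n : nat => 8 ^ (n%:Z * 1) * phi ((2 ^ (n%:Z * 1))^-1 *: x) ((2 ^ (n%:Z * 1))^-1 *: y))
     = (fun n => 8 ^+ n * phi ((2 ^+ n)^-1 *: x) ((2 ^+ n)^-1 *: y)) by apply/funext => n; rewrite e1.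
  done.
have ew x m n : w ((2 ^+ m)^-1 *: x) n = w x (n + m)%N.
  by rewrite /w scalerA -invfM -exprD addSn.
have p28 m : (2 : R) ^+ m <= 8 ^+ m by apply: pw_le; rewrite ?ler0n ?ler_nat.
have QsA x m n : 2 ^+ m * Q ((2 ^+ m)^-1 *: x) n <= 2 * Q x (n + m)%N.
  rewrite /Q /psA /psC ew !exprD.
  have := p28 m; have := p28 n; have := phi0 (w x (n + m)%N) (w x (n + m)%N).
  have := exprn_ge0 m (ler0n R 2); have := exprn_ge0 n (ler0n R 2).
  set P := phi _ _; set p := (2 : R) ^+ m; set q := (2 : R) ^+ n.
  set r := (8 : R) ^+ n; set s := (8 : R) ^+ m.
  move=> q0 p0 P0 qr ps.
  have r0 : 0 <= r by apply: le_trans qr.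
  have h1 : 0 <= q * p * P by rewrite !mulr_ge0.
  have h2 : p * r * P <= s * r * P by rewrite ler_wpM2r // ler_wpM2r.
  have h3 : 0 <= r * s * P by rewrite !mulr_ge0 // (le_trans p0).
  nra.
have QsC x m n : 8 ^+ m * Q ((2 ^+ m)^-1 *: x) n <= 2 * Q x (n + m)%N.
  rewrite /Q /psA /psC ew !exprD.
  have := p28 m; have := p28 n; have := phi0 (w x (n + m)%N) (w x (n + m)%N).
  have := exprn_ge0 m (ler0n R 2); have := exprn_ge0 n (ler0n R 2).
  set P := phi _ _; set p := (2 : R) ^+ m; set q := (2 : R) ^+ n.
  set r := (8 : R) ^+ n; set s := (8 : R) ^+ m.
  move=> q0 p0 P0 qr ps.
  have r0 : 0 <= r by apply: le_trans qr.
  have s0 : 0 <= s by apply: le_trans ps.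
  have h1 : 0 <= q * p * P by rewrite !mulr_ge0.
  have h2 : s * q * P <= s * r * P by rewrite ler_wpM2r // ler_wpM2l.
  have h3 : 0 <= r * s * P by rewrite !mulr_ge0.
  nra.
have [A [C [hA hC hb hu]]] := core f phi ho hD 2 2 8 Q psA psC
  (or_introl (conj erefl (conj erefl erefl))) psA0 psC0 stepA stepC (fun _ _ => erefl)
  Qfin HLA HLC QsA QsC.
have Beq x : (\sum_((`|(1 : int) - 1|%N %/ 2)%N <= i <oo)
        (((2 : R) ^ (i%:Z * 1) + (8 : R) ^ (i%:Z * 1)) *
          phi ((2 ^ (1 * (i%:Z + 1)))^-1 *: x) ((2 ^ (1 * (i%:Z + 1)))^-1 *: x))%:E =
      \sum_(0 <= n <oo) (Q x n)%:E)%E.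
  apply: eq_eseriesr => i _.
  rewrite !e1 (ez _ (1 * (i%:Z + 1)) i.+1); last by rewrite mul1r -addn1 PoszD.
  by rewrite /Q /psA /psC /w mulrDl.
exists A, C; split => //.
  by move=> x; rewrite Beq; exact: hb.
move=> A' C' hA' hC' hb'; apply: hu => // x; rewrite -Beq; exact: hb'.
Qed.

Lemma case2 (R : realType) (X : normedModType R)
  (Y : completeNormedModType R) (l : int) (f : X -> Y) (phi : X -> X -> R) :
  l = -1 ->
  odd_fun f ->
  (forall x y, 0 <= phi x y) ->
  (forall x y, `|Dfun f x y| <= phi x y) ->
  (forall x : X, (\sum_(1 <= i <oo)
      ((2 : R) ^ (i%:Z * l) * phi ((2 ^ (i%:Z * l))^-1 *: x) ((2 ^ (i%:Z * l))^-1 *: x))%:E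
      < +oo)%E) ->
  (forall x : X, (\sum_(1 <= i <oo)
      ((8 : R) ^ (i%:Z * l) * phi ((2 ^ (i%:Z * l))^-1 *: x) ((2 ^ (i%:Z * l))^-1 *: x))%:E
      < +oo)%E) ->
  (forall x y : X, ((2 : R) ^ (n%:Z * l) * phi ((2 ^ (n%:Z * l))^-1 *: x)
                      ((2 ^ (n%:Z * l))^-1 *: y)) @[n --> \oo] --> 0) ->
  (forall x y : X, ((8 : R) ^ (n%:Z * l) * phi ((2 ^ (n%:Z * l))^-1 *: x)
                      ((2 ^ (n%:Z * l))^-1 *: y)) @[n --> \oo] --> 0) ->
  let bound (A C : X -> Y) := forall x : X,
    ((`|f x - A x - C x|)%:E <= (12%:R^-1 : R)%:E *
      \sum_((`|l - 1|%N %/ 2)%N <= i <oo)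
        (((2 : R) ^ (i%:Z * l) + (8 : R) ^ (i%:Z * l)) *
          phi ((2 ^ (l * (i%:Z + l)))^-1 *: x) ((2 ^ (l * (i%:Z + l)))^-1 *: x))%:E)%E in
  exists A C : X -> Y,
    [/\ additive_fun A, cubic_fun C, bound A C &
      forall A' C' : X -> Y, additive_fun A' -> cubic_fun C' -> bound A' C' ->
        A' = A /\ C' = C].

Proof.
move=> -> ho phi0 hD S2 S8 L2 L8 bound.
pose w (x : X) n := 2 ^+ n *: x.
pose psA x n := (2 ^+ n.+1)^-1 * phi (w x n) (w x n).
pose psC x n := (8 ^+ n.+1)^-1 * phi (w x n) (w x n).
pose Q x n := psA x n + psC x n.
have e1 (i : nat) : i%:Z * -1 = - i%:Z by rewrite mulrN1.
have psA0 x n : 0 <= psA x n by rewrite mulr_ge0 ?invr_ge0 ?exprn_ge0.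
have psC0 x n : 0 <= psC x n by rewrite mulr_ge0 ?invr_ge0 ?exprn_ge0.
have Qfin x : (\sum_(0 <= n <oo) (Q x n)%:E < +oo)%E.
  rewrite (eq_eseriesr (fun n _ => EFinD (psA x n) (psC x n))).
  rewrite nneseriesD; last 2 first.
  - by move=> n _ _; rewrite lee_fin.
  - by move=> n _ _; rewrite lee_fin.
  apply: lte_add_pinfty.
  - rewrite (sum_sc _ (fun n => 2 ^ (n%:Z * -1) * phi ((2 ^ (n%:Z * -1))^-1 *: x)
                 ((2 ^ (n%:Z * -1))^-1 *: x)) (2^-1)) //.
    + apply: fin_scale => //.
        by apply: nneseries_ge0 => n _ _; rewrite lee_fin mulr_ge0 ?exprz_ge0.
      rewrite nneseries_recl //; last by move=> i _; rewrite lee_fin mulr_ge0 ?exprz_ge0.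
      by apply: lte_add_pinfty; [rewrite ltry | exact: S2].
    + by move=> n; rewrite mulr_ge0 ?exprz_ge0.
    + move=> n; rewrite /psA /w !(ezN _ _ n) ?e1 // invrK.
      by rewrite exprS invfM mulrA.
  - rewrite (sum_sc _ (fun n => 8 ^ (n%:Z * -1) * phi ((2 ^ (n%:Z * -1))^-1 *: x)
                 ((2 ^ (n%:Z * -1))^-1 *: x)) (8^-1)) //.
    + apply: fin_scale => //.
        by apply: nneseries_ge0 => n _ _; rewrite lee_fin mulr_ge0 ?exprz_ge0.
      rewrite nneseries_recl //; last by move=> i _; rewrite lee_fin mulr_ge0 ?exprz_ge0.
      by apply: lte_add_pinfty; [rewrite ltry | exact: S8].
    + by move=> n; rewrite mulr_ge0 ?exprz_ge0.
    + move=> n; rewrite /psC /w !(ezN _ _ n) ?e1 // invrK.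
      by rewrite [8 ^+ n.+1]exprS invfM mulrA.
have tinv m : ((2^-1 : R) ^+ m)^-1 = 2 ^+ m by rewrite exprVn invrK.
have stepA x n : `|sU 2^-1 2^-1 (fun z => f (2 *: z) - 8 *: f z) x n.+1
    - sU 2^-1 2^-1 (fun z => f (2 *: z) - 8 *: f z) x n| <= 2^-1 * psA x n.
  exact: (step_down hD _ 2 (ltr0n _ 2) (fun w => Dzz8 f w ho)).
have stepC x n : `|sU 8^-1 2^-1 (fun z => f (2 *: z) - 2 *: f z) x n.+1
    - sU 8^-1 2^-1 (fun z => f (2 *: z) - 2 *: f z) x n| <= 2^-1 * psC x n.
  exact: (step_down hD _ 8 (ltr0n _ 8) (fun w => Dzz2 f w ho)).
have HLA x y : ((2^-1) ^+ n * phi (((2^-1) ^+ n)^-1 *: x) (((2^-1) ^+ n)^-1 *: y)) @[n --> \oo] --> 0.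
  have := L2 x y.
  have -> : (fun n : nat => 2 ^ (n%:Z * -1) * phi ((2 ^ (n%:Z * -1))^-1 *: x) ((2 ^ (n%:Z * -1))^-1 *: y))
     = (fun n => (2^-1) ^+ n * phi (((2^-1) ^+ n)^-1 *: x) (((2^-1) ^+ n)^-1 *: y)).
    by apply/funext => n; rewrite !(ezN _ _ n) ?e1 // exprVn.
  done.
have HLC x y : ((8^-1) ^+ n * phi (((2^-1) ^+ n)^-1 *: x) (((2^-1) ^+ n)^-1 *: y)) @[n --> \oo] --> 0.
  have := L8 x y.
  have -> : (fun n : nat => 8 ^ (n%:Z * -1) * phi ((2 ^ (n%:Z * -1))^-1 *: x) ((2 ^ (n%:Z * -1))^-1 *: y))
     = (fun n => (8^-1) ^+ n * phi (((2^-1) ^+ n)^-1 *: x) (((2^-1) ^+ n)^-1 *: y)).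
    by apply/funext => n; rewrite !(ezN _ _ n) ?e1 // !exprVn.
  done.
have ew x m n : w (((2^-1) ^+ m)^-1 *: x) n = w x (n + m)%N.
  by rewrite /w tinv scalerA -exprD.
have p28 m : (2 : R) ^+ m <= 8 ^+ m by apply: pw_le; rewrite ?ler0n ?ler_nat.
have ip28 m : ((8 : R) ^+ m)^-1 <= (2 ^+ m)^-1.
  by apply: inv_le => //; rewrite exprn_gt0 // ltr0n.
have i0 (k : R) m : 0 < k -> 0 <= (k ^+ m)^-1 by move=> k0; rewrite invr_ge0 exprn_ge0 // ltW.
have QsA x m n : (2^-1) ^+ m * Q (((2^-1) ^+ m)^-1 *: x) n <= 2 * Q x (n + m)%N.
  rewrite /Q /psA /psC ew exprVn -addSn !exprD !invfM.
  have := ip28 m; have := ip28 n.+1; have := phi0 (w x (n + m)%N) (w x (n + m)%N).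
  have := i0 2 m (ltr0n _ 2); have := i0 2 n.+1 (ltr0n _ 2).
  have := i0 8 m (ltr0n _ 8); have := i0 8 n.+1 (ltr0n _ 8).
  set P := phi _ _; set u := ((2 : R) ^+ m)^-1; set a := ((2 : R) ^+ n.+1)^-1.
  set b := ((8 : R) ^+ n.+1)^-1; set u' := ((8 : R) ^+ m)^-1.
  move=> b0 u'0 a0 u0 P0 ba u'u.
  have h1 : u * b * P <= u * a * P by rewrite ler_wpM2r // ler_wpM2l.
  have h2 : 0 <= a * u * P by rewrite !mulr_ge0.
  have h3 : 0 <= b * u' * P by rewrite !mulr_ge0.
  nra.
have QsC x m n : (8^-1) ^+ m * Q (((2^-1) ^+ m)^-1 *: x) n <= 2 * Q x (n + m)%N.
  rewrite /Q /psA /psC ew exprVn -addSn !exprD !invfM.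
  have := ip28 m; have := ip28 n.+1; have := phi0 (w x (n + m)%N) (w x (n + m)%N).
  have := i0 2 m (ltr0n _ 2); have := i0 2 n.+1 (ltr0n _ 2).
  have := i0 8 m (ltr0n _ 8); have := i0 8 n.+1 (ltr0n _ 8).
  set P := phi _ _; set u := ((2 : R) ^+ m)^-1; set a := ((2 : R) ^+ n.+1)^-1.
  set b := ((8 : R) ^+ n.+1)^-1; set u' := ((8 : R) ^+ m)^-1.
  move=> b0 u'0 a0 u0 P0 ba u'u.
  have h1 : u' * a * P <= u * a * P by rewrite ler_wpM2r // ler_wpM2r.
  have h2 : 0 <= a * u * P by rewrite !mulr_ge0.
  have h3 : 0 <= b * u' * P by rewrite !mulr_ge0.
  nra.
have [A [C [hA hC hb hu]]] := core f phi ho hD 2^-1 2^-1 8^-1 Q psA psC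
  (or_intror (conj erefl (conj erefl erefl))) psA0 psC0 stepA stepC (fun _ _ => erefl)
  Qfin HLA HLC QsA QsC.
have Beq x : (\sum_((`|(-1 : int) - 1|%N %/ 2)%N <= i <oo)
        (((2 : R) ^ (i%:Z * -1) + (8 : R) ^ (i%:Z * -1)) *
          phi ((2 ^ (-1 * (i%:Z + -1)))^-1 *: x) ((2 ^ (-1 * (i%:Z + -1)))^-1 *: x))%:E =
      \sum_(0 <= n <oo) (Q x n)%:E)%E.
  rewrite -(nneseries_addn 1 (f := fun i => (((2 : R) ^ (i%:Z * -1) + (8 : R) ^ (i%:Z * -1)) *
          phi ((2 ^ (-1 * (i%:Z + -1)))^-1 *: x) ((2 ^ (-1 * (i%:Z + -1)))^-1 *: x))%:E)); last first.
    by move=> i; rewrite lee_fin mulr_ge0 ?addr_ge0 ?exprz_ge0.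
  apply: eq_eseriesr => i _.
  have q1 : ((i + 1)%N%:Z * -1 = - (i.+1)%:Z)%R by rewrite e1 addn1.
  have q2 : ((-1) * ((i + 1)%N%:Z + -1) = - i%:Z)%R by rewrite -addn1 PoszD; ring.
  rewrite (ezN 2 _ _ q1) (ezN 8 _ _ q1) (ezN 2 _ _ q2).
  by rewrite invrK /Q /psA /psC /w mulrDl.
exists A, C; split => //.
  by move=> x; rewrite Beq; exact: hb.
move=> A' C' hA' hC' hb'; apply: hu => // x; rewrite -Beq; exact: hb'.
Qed.

Theorem theorem3p3 (R : realType) (X : normedModType R)
  (Y : completeNormedModType R) (l : int) (f : X -> Y) (phi : X -> X -> R) :
  (l = 1 \/ l = -1) ->
  odd_fun f ->
  (forall x y, 0 <= phi x y) ->
  (forall x y, `|Dfun f x y| <= phi x y) ->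
  (forall x : X, (\sum_(1 <= i <oo)
      ((2 : R) ^ (i%:Z * l) * phi ((2 ^ (i%:Z * l))^-1 *: x) ((2 ^ (i%:Z * l))^-1 *: x))%:E
      < +oo)%E) ->
  (forall x : X, (\sum_(1 <= i <oo)
      ((8 : R) ^ (i%:Z * l) * phi ((2 ^ (i%:Z * l))^-1 *: x) ((2 ^ (i%:Z * l))^-1 *: x))%:E
      < +oo)%E) ->
  (forall x y : X, ((2 : R) ^ (n%:Z * l) * phi ((2 ^ (n%:Z * l))^-1 *: x)
                      ((2 ^ (n%:Z * l))^-1 *: y)) @[n --> \oo] --> 0) ->
  (forall x y : X, ((8 : R) ^ (n%:Z * l) * phi ((2 ^ (n%:Z * l))^-1 *: x)
                      ((2 ^ (n%:Z * l))^-1 *: y)) @[n --> \oo] --> 0) ->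
  let bound (A C : X -> Y) := forall x : X,
    ((`|f x - A x - C x|)%:E <= (12%:R^-1 : R)%:E *
      \sum_((`|l - 1|%N %/ 2)%N <= i <oo)
        (((2 : R) ^ (i%:Z * l) + (8 : R) ^ (i%:Z * l)) *
          phi ((2 ^ (l * (i%:Z + l)))^-1 *: x) ((2 ^ (l * (i%:Z + l)))^-1 *: x))%:E)%E in
  exists A C : X -> Y,
    [/\ additive_fun A, cubic_fun C, bound A C &
      forall A' C' : X -> Y, additive_fun A' -> cubic_fun C' -> bound A' C' ->
        A' = A /\ C' = C].
Proof.
move=> [hl|hl].
  exact: (case1 _ _ _ _ _ _ hl).
exact: (case2 _ _ _ _ _ _ hl).
Qed.
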